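(* Let $\mathbf A$ be a finite subdirectly irreducible cBCK-algebra. Then, up to isomorphism, $$\mathcal S(\mathbf A)=\mathcal S_d(\mathbf A)\cup \mathcal S_\delta(\mathcal S_d(\mathbf A)).$$ Moreover, if every algebra in $\mathcal S_\delta(\mathcal S_d(\mathbf A))$ is a chain, then $\mathcal S(\mathbf A)=\mathcal S_d(\mathbf A)$.
   Context: A BCK-algebra is an algebra $(A,\ominus,0)$ of type $(2,0)$ satisfying $((x\ominus y)\ominus(x\ominus z))\ominus(z\ominus y)=0$, $x\ominus 0=x$, $0\ominus x=0$, and ($x\ominus y=0$ and $y\ominus x=0$ imply $x=y$); it is ordered by $x\le y$ iff $x\ominus y=0$. A cBCK-algebra is a BCK-algebra satisfying $x\ominus(x\ominus y)=y\ominus(y\ominus x)$; its order is a meet-semilattice with $x\wedge y=x\ominus(x\ominus y)$. Finite subdirectly irreducible cBCK-algebras are, as posets, rooted trees with root $0$. For an element $a$, $\mathrm{h}(a)=|[0,a]|-1$ is its height, and the height of an algebra is the maximum height of its elements; $\mathrm{m}(\cdot)$ denotes the set of maximal elements. $\mathcal S(\mathbf A)$ is the set of subalgebras of $\mathbf A$; $\mathcal S_d(\mathbf A)$ is the set of subalgebras of $\mathbf A$ whose universe is a downset of $\mathbf A$. For a finite cBCK-algebra $\mathbf C$ whose order is a rooted tree, of height $n$, and for $k$ a divisor of $n$ with $k\ne 1,n$, put $C_k=\{x\in C\mid k\text{ divides }\mathrm{h}(x)\}$; $\mathcal S_\delta(\mathbf C)$ denotes the set of subalgebras of $\mathbf C$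 whose universe is of the form $C_k\cup\mathrm{m}(\mathbf C)$ for such a $k$. For a set $\mathcal X$ of such algebras, $\mathcal S_\delta(\mathcal X)=\bigcup_{\mathbf C\in\mathcal X}\mathcal S_\delta(\mathbf C)$. *)

(* Defs.v *)
From mathcomp Require Import all_boot.
Set Implicit Arguments. Unset Strict Implicit. Unset Printing Implicit Defensive.

Record cBCK (T : finType) := CBCK {
  bop : T -> T -> T;
  bzero : T;
  bck_ax1 : forall x y z, bop (bop (bop x y) (bop x z)) (bop z y) = bzero;
  bck_ax2 : forall x, bop x bzero = x;
  bck_ax3 : forall x, bop bzero x = bzero;
  bck_ax4 : forall x y, bop x y = bzero -> bop y x = bzero -> x = y;
  cbck_comm : forall x y, bop x (bop x y) = bop y (bop y x)
}.

Section Defs.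
Variables (T : finType) (A : cBCK T).
Local Notation "x ⊖ y" := (bop A x y) (at level 50, left associativity).
Local Notation O := (bzero A).

Definition ble (x y : T) : bool := (x ⊖ y) == O.

(* congruences (0 is a constant, so only compatibility with ⊖ is needed) *)
Definition congruence (th : T -> T -> Prop) : Prop :=
  (forall x, th x x) /\ (forall x y, th x y -> th y x) /\
  (forall x y z, th x y -> th y z -> th x z) /\
  (forall x y x' y', th x x' -> th y y' -> th (x ⊖ y) (x' ⊖ y')).

(* subdirectly irreducible: the non-identity congruences have a
   non-identity intersection (this includes nontriviality) *)
Definition subdirectly_irreducible : Prop :=
  exists a b : T, a <> b /\
    forall th, congruence th -> (exists x y, x <> y /\ th x y) -> th a b.

Definition is_subalg (S : {set T}) : Prop :=
  O \in S /\ forall x y, x \in S -> y \in S -> (x ⊖ y) \in S.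

Definition is_downset (S : {set T}) : Prop :=
  forall x y, y \in S -> ble x y -> x \in S.

Definition in_Sd (S : {set T}) : Prop := is_subalg S /\ is_downset S.

Definition hgt (S : {set T}) (a : T) : nat :=
  (#|[set x in S | ble O x && ble x a]|).-1.

Definition height (S : {set T}) : nat := \max_(x in S) hgt S x.

Definition maxel (S : {set T}) : {set T} :=
  [set x in S | [forall y in S, ble x y ==> (y == x)]].

Definition Ck (C : {set T}) (k : nat) : {set T} :=
  [set x in C | k %| hgt C x].

Definition in_Sdelta (C D : {set T}) : Prop :=
  is_subalg D /\
  exists k : nat, k %| height C /\ k <> 1 /\ k <> height C /\
    D = Ck C k :|: maxel C.

Definition in_Sdelta_Sd (D : {set T}) : Prop :=
  exists C, in_Sd C /\ in_Sdelta C D.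

Definition subalg_iso (B D : {set T}) : Prop :=
  exists f : T -> T, {in B &, injective f} /\ f @: B = D /\
    forall x y, x \in B -> y \in B -> f (x ⊖ y) = f x ⊖ f y.

Definition is_chain (D : {set T}) : Prop :=
  forall x y, x \in D -> y \in D -> ble x y \/ ble y x.

End Defs.

(* Main.v *)
Require Import Defs.
From mathcomp Require Import all_boot zify.
Set Implicit Arguments. Unset Strict Implicit. Unset Printing Implicit Defensive.

Section Basics.
Variables (T : finType) (A : cBCK T).
Local Notation "x ⊖ y" := (bop A x y) (at level 50, left associativity).
Local Notation O := (bzero A).
Local Notation le x y := (bop A x y = bzero A).

Lemma bsubxx x : x ⊖ x = O.
Proof. by have := bck_ax1 A x O O; rewrite !bck_ax2. Qed.

Lemma ble_sub x y : le (x ⊖ y) x.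
Proof. by have := bck_ax1 A x y O; rewrite !bck_ax2 bck_ax3 bck_ax2. Qed.

Lemma ble_trans x y z : le x y -> le y z -> le x z.
Proof. by move=> h1 h2; have := bck_ax1 A x z y; rewrite h1 h2 !bck_ax2. Qed.

Lemma ble_antisym x y : le x y -> le y x -> x = y.
Proof. exact: bck_ax4. Qed.

Lemma bsub_anti x y z : le y z -> le (x ⊖ z) (x ⊖ y).
Proof. by move=> h; have := bck_ax1 A x z y; rewrite h bck_ax2. Qed.

Lemma bsub_mono x y z : le x y -> le (x ⊖ z) (y ⊖ z).
Proof. by move=> h; have := bck_ax1 A x z y; rewrite h bck_ax2. Qed.

Lemma ble0 x : le O x.
Proof. exact: bck_ax3. Qed.

Lemma ble_0 x : le x O -> x = O.
Proof. by rewrite bck_ax2. Qed.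

Lemma bmeet_le x y : le (x ⊖ (x ⊖ y)) y.
Proof. by have := bck_ax1 A x O y; rewrite !bck_ax2. Qed.

Lemma bmeet_lel x y : le (x ⊖ (x ⊖ y)) x.
Proof. exact: ble_sub. Qed.

Lemma bmeetC x y : x ⊖ (x ⊖ y) = y ⊖ (y ⊖ x).
Proof. exact: cbck_comm. Qed.

Lemma bmeet_id x y : le x y -> y ⊖ (y ⊖ x) = x.
Proof. by move=> h; rewrite -bmeetC h bck_ax2. Qed.

Lemma bexch x y z : (x ⊖ y) ⊖ z = (x ⊖ z) ⊖ y.
Proof.
have H : forall x y z, le ((x ⊖ y) ⊖ z) ((x ⊖ z) ⊖ y).
  move=> a b c; apply: ble_trans (bsub_anti (a ⊖ b) (bmeet_le a c)) _.
  exact: bck_ax1.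
by apply: ble_antisym; apply: H.
Qed.

Lemma bsub_sub x y z : le ((x ⊖ z) ⊖ (y ⊖ z)) (x ⊖ y).
Proof. by rewrite /= bexch; apply: bck_ax1. Qed.

Lemma bmeet_glb w a b : le w a -> le w b -> le w (a ⊖ (a ⊖ b)).
Proof.
move=> ha hb; rewrite -(bmeet_id ha).
exact: bsub_anti (bsub_anti a hb).
Qed.

End Basics.

Section Ideals.
Variables (T : finType) (A : cBCK T).
Local Notation "x ⊖ y" := (bop A x y) (at level 50, left associativity).
Local Notation O := (bzero A).
Local Notation le x y := (bop A x y = bzero A).
Local Notation meet x y := (x ⊖ (x ⊖ y)).

Definition ideal (I : T -> Prop) := I O /\ forall x y, I (x ⊖ y) -> I y -> I x.
Definition thI (I : T -> Prop) x y := I (x ⊖ y) /\ I (y ⊖ x).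

Lemma ideal_down I x y : ideal I -> le x y -> I y -> I x.
Proof. by case=> h0 h hxy Iy; apply: (h x y) => //; rewrite hxy. Qed.

Lemma thI_cong I : ideal I -> congruence A (thI I).
Proof.
move=> hI; have [h0 h] := hI.
have tr : forall x y z, thI I x y -> thI I y z -> thI I x z.
  move=> x y z [a1 a2] [b1 b2]; split.
    apply: (h _ (x ⊖ y)) => //; apply: ideal_down hI _ b1; exact: bck_ax1.
  apply: (h _ (z ⊖ y)) => //; apply: ideal_down hI _ a2; exact: bck_ax1.
split; first by move=> x; split; rewrite bsubxx.
split; first by move=> x y [].
split; first exact: tr.
move=> x y x' y' [a1 a2] [b1 b2].
apply: (tr _ (x' ⊖ y)); split.
- apply: ideal_down hI _ a1; exact: bsub_sub.
- apply: ideal_down hI _ a2; exact: bsub_sub.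
- apply: ideal_down hI _ b2; exact: bck_ax1.
- apply: ideal_down hI _ b1; exact: bck_ax1.
Qed.

Definition polar (S : T -> Prop) t := forall s, S s -> meet t s = O.

Lemma polar_ideal S : ideal (polar S).
Proof.
split; first by move=> s _; rewrite bck_ax3.
move=> u v huv hv s Ss.
set w := meet u s.
have wu : le w u by apply: ble_sub.
have ws : le w s by apply: bmeet_le.
have h1 : le (w ⊖ v) (meet (u ⊖ v) s).
  apply: bmeet_glb; first exact: bsub_mono.
  exact: ble_trans (ble_sub _ _ _) ws.
rewrite huv // in h1.
have h1' : le w v by apply: ble_0.
have := bmeet_glb h1' ws; rewrite hv //.
by move/ble_0.
Qed.

Lemma SI_U : subdirectly_irreducible A ->
  forall x y, x <> O -> y <> O -> meet x y <> O.
Proof.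
move=> [a [b [ab hab]]] x y x0 y0 hxy.
pose I := polar (fun s => s = x).
pose J := polar I.
have IJ : forall t, I t -> J t -> t = O.
  move=> t It Jt; have := Jt t It. by rewrite bsubxx bck_ax2.
have Iy : I y by move=> s ->; rewrite bmeetC.
have Jx : J x by move=> s Is; rewrite bmeetC; apply: Is.
have th1 := hab _ (thI_cong (polar_ideal (fun s => s = x))).
have th2 := hab _ (thI_cong (polar_ideal I)).
have [|i1 i2] := th1.
  exists y, O; split => //; split; first by rewrite bck_ax2.
  by rewrite bck_ax3; apply: (polar_ideal _).1.
have [|j1 j2] := th2.
  exists x, O; split => //; split; first by rewrite bck_ax2.
  by rewrite bck_ax3; apply: (polar_ideal _).1.
apply: ab; apply: ble_antisym; apply: IJ => //.
Qed.

End Ideals.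

Section Tree.
Variables (T : finType) (A : cBCK T).
Local Notation "x ⊖ y" := (bop A x y) (at level 50, left associativity).
Local Notation O := (bzero A).
Local Notation le x y := (bop A x y = bzero A).
Local Notation meet x y := (x ⊖ (x ⊖ y)).

Definition down x := [set z | ble A z x].
Lemma in_down z x : (z \in down x) = (z ⊖ x == O).
Proof. by rewrite inE. Qed.

Hypothesis U : forall x y, x <> O -> y <> O -> meet x y <> O.

Lemma exists_atom x : x <> O -> exists c, c <> O /\ forall u, u <> O -> le c u.
Proof.
have [n hn] : exists n, #|down x| <= n by exists #|down x|.
elim: n x hn => [|n IH] x hn x0.
  have : 0 < #|down x| by apply/card_gt0P; exists x; rewrite in_down bsubxx.
  by rewrite leqNgt in hn; rewrite (negbTE hn).
case: (boolP [forall u, (u != O) ==> ble A x u]) => [/forallP h|].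
  exists x; split => // u /eqP u0; have := h u; rewrite u0 /= => /eqP; done.
rewrite negb_forall => /existsP [u]; rewrite negb_imply => /andP [/eqP u0 nxu].
have m0 := U x0 u0.
apply: (IH (meet x u)) => //.
have sub : down (meet x u) \proper down x.
  apply/properP; split.
    apply/subsetP => z; rewrite !in_down => /eqP h; apply/eqP.
    exact: ble_trans h (ble_sub _ _ _).
  exists x; first by rewrite in_down bsubxx.
  rewrite in_down; apply/negP => /eqP h.
  by move: nxu; rewrite /ble (ble_trans h (bmeet_le _ _ _)) eqxx.
by move: (proper_card sub) => h; rewrite -ltnS; apply: leq_trans h hn.
Qed.

End Tree.

Section Chain.
Variables (T : finType) (A : cBCK T).
Local Notation "x ⊖ y" := (bop A x y) (at level 50, left associativity).
Local Notation O := (bzero A).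
Local Notation le x y := (bop A x y = bzero A).
Local Notation meet x y := (x ⊖ (x ⊖ y)).
Local Notation down := (down A).
Variable c : T.
Hypothesis c0 : c <> O.
Hypothesis cmin : forall u, u <> O -> le c u.

Local Notation phi x := (x ⊖ c).
Definition N x := #|down x|.

Lemma below_phi x y : le y x -> y <> x -> le y (phi x).
Proof.
move=> yx ny.
have h : x ⊖ y <> O by move=> h; apply: ny; exact: ble_antisym yx h.
rewrite -{1}(bmeet_id yx).
by move: (bsub_anti x (cmin h)).
Qed.

Lemma phi_neq x : x <> O -> phi x <> x.
Proof.
move=> x0 h; have : meet x c = O by rewrite h bsubxx.
by rewrite (bmeet_id (cmin x0)).
Qed.

Lemma N_mono y x : le y x -> N y <= N x.
Proof.
move=> yx; apply: subset_leq_card; apply/subsetP => z; rewrite !in_down.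
by move/eqP=> h; apply/eqP; apply: ble_trans h yx.
Qed.

Lemma N_phi x : x <> O -> N (phi x) + 1 = N x.
Proof.
move=> x0; rewrite /N.
have -> : down x = x |: down (phi x).
  apply/setP => z; rewrite in_setU1 !in_down.
  case: (z =P x) => [->|nz]; first by rewrite bsubxx eqxx.
  apply/eqP/eqP => h; first exact: below_phi.
  exact: ble_trans h (ble_sub _ _ _).
rewrite cardsU1 in_down addnC; congr (_ + _).
case: (_ =P _) => // h; exfalso; apply: (phi_neq x0).
exact: ble_antisym (ble_sub A x c) h.
Qed.

Lemma N_pos x : 0 < N x.
Proof. by apply/card_gt0P; exists x; rewrite in_down bsubxx. Qed.

Lemma N_strict y x : le y x -> y <> x -> N y < N x.
Proof.
move=> yx ny; have x0 : x <> O by move=> x0; apply: ny; rewrite x0 in yx *; apply: ble_0.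
have := N_mono (below_phi yx ny); rewrite -(N_phi x0) addn1 ltnS; done.
Qed.

Lemma N0 : N O = 1.
Proof.
rewrite /N (_ : down O = [set O]) ?cards1 //.
by apply/setP => z; rewrite in_set1 in_down; apply/eqP/eqP => [/ble_0|->]; rewrite ?bsubxx.
Qed.

Lemma N_eq0 x : N x = 1 -> x = O.
Proof.
move=> h; case: (x =P O) => // x0; have := N_phi x0; rewrite h.
move=> e; have := N_pos (phi x); lia.
Qed.

Lemma chain y z x : le y x -> le z x -> le y z \/ le z y.
Proof.
have [n hn] : exists n, N x <= n by exists (N x).
elim: n x hn y z => [|n IH] x hn y z yx zx.
  by have := N_pos x; rewrite leqNgt in hn; rewrite (negbTE hn).
case: (y =P x) => [->|ny]; first by right.
case: (z =P x) => [->|nz]; first by left.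
have x0 : x <> O by move=> x0; apply: ny; rewrite x0 in yx *; apply: ble_0.
apply: (IH (phi x)); try exact: below_phi.
by rewrite -ltnS; apply: leq_trans hn; rewrite -(N_phi x0) addn1.
Qed.

Lemma N_le y z x : le y x -> le z x -> N y <= N z -> le y z.
Proof.
move=> yx zx h; case: (chain yx zx) => // zy.
case: (z =P y) => [->|nz]; first exact: bsubxx.
by have := N_strict zy nz; rewrite ltnNge h.
Qed.

Lemma N_inj y z x : le y x -> le z x -> N y = N z -> y = z.
Proof.
move=> yx zx h; apply: ble_antisym; [apply: (N_le yx zx) | apply: (N_le zx yx)]; by rewrite h.
Qed.

Lemma N_sub x y : le y x -> N (x ⊖ y) + N y = N x + 1.
Proof.
have [n hn] : exists n, N x <= n by exists (N x).
elim: n x hn y => [|n IH] x hn y yx.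
  by have := N_pos x; rewrite leqNgt in hn; rewrite (negbTE hn).
case: (y =P x) => [->|ny]; first by rewrite bsubxx N0 addnC.
have x0 : x <> O by move=> x0; apply: ny; rewrite x0 in yx *; apply: ble_0.
have xy0 : x ⊖ y <> O by move=> h; apply: ny; exact: ble_antisym yx h.
rewrite -(N_phi xy0) bexch.
have hp : N (phi x) <= n by rewrite -ltnS; apply: leq_trans hn; rewrite -(N_phi x0) addn1.
rewrite -addnA (addnC 1) addnA (IH _ hp _ (below_phi yx ny)).
by rewrite N_phi.
Qed.

Lemma N_iter x k : k < N x -> N (iter k (fun u => phi u) x) = N x - k /\ le (iter k (fun u => phi u) x) x.
Proof.
elim: k => [|k IH] hk /=; first by rewrite subn0 bsubxx.
have [h1 h2] := IH (ltnW hk).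
have i0 : iter k (fun u => phi u) x <> O.
  by move=> e; rewrite e N0 in h1; lia.
split.
  by have := N_phi i0; rewrite h1 /= => e; lia.
exact: ble_trans (ble_sub _ _ _) h2.
Qed.

Lemma exists_N x k : 0 < k -> k <= N x -> exists z, le z x /\ N z = k.
Proof.
move=> k0 kx; exists (iter (N x - k) (fun u => phi u) x).
have h : N x - k < N x by rewrite ltn_subrL k0 (N_pos x).
have [e1 e2] := N_iter h; split => //; rewrite e1 subKn //.
Qed.

End Chain.

Section Classify.
Variables (T : finType) (A : cBCK T).
Local Notation "x ⊖ y" := (bop A x y) (at level 50, left associativity).
Local Notation O := (bzero A).
Local Notation le x y := (bop A x y = bzero A).
Local Notation meet x y := (x ⊖ (x ⊖ y)).
Local Notation down := (down A).
Local Notation N := (N A).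
Variable c : T.
Hypothesis c0 : c <> O.
Hypothesis cmin : forall u, u <> O -> le c u.
Hypothesis U : forall x y, x <> O -> y <> O -> meet x y <> O.

Let Nphi := N_phi c0 cmin.
Let Nle := N_le c0 cmin.
Let Ninj := N_inj c0 cmin.
Let Nsub := N_sub c0 cmin.
Let Nstrict := N_strict c0 cmin.
Let Neq0 := N_eq0 c0 cmin.
Let Nmono := @N_mono T A.
Let Npos := @N_pos T A.

Variable B : {set T}.
Hypothesis B0 : O \in B.
Hypothesis Bsub : forall x y, x \in B -> y \in B -> (x ⊖ y) \in B.
Variable b0 : T.
Hypothesis b0B : b0 \in B.
Hypothesis b0nz : b0 <> O.
Hypothesis b0min : forall b, b \in B -> b <> O -> N b0 <= N b.

Local Notation d := (N b0).-1.

Lemma d_pos : 0 < d.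
Proof.
have := Npos b0; case: (N b0 =P 1) => [/Neq0 //|]; lia.
Qed.

Lemma step b : b \in B -> b <> O -> exists m, [/\ m \in B, le m b & N m = N b0].
Proof.
move=> bB bnz; exists (meet b b0); split.
- by apply: Bsub => //; apply: Bsub.
- exact: ble_sub.
- apply/eqP; rewrite eqn_leq; apply/andP; split.
    by apply: Nmono; apply: bmeet_le.
  apply: b0min; first by apply: Bsub => //; apply: Bsub.
  exact: U.
Qed.

Lemma claim1 b : b \in B -> d %| (N b).-1.
Proof.
have [n hn] : exists n, N b <= n by exists (N b).
elim: n b hn => [|n IH] b hn bB; first by have := Npos b; lia.
case: (b =P O) => [->|bnz]; first by rewrite N0.
have [m [mB mb Nm]] := step bB bnz.
have e := Nsub mb.
have mnz : m <> O by move=> e0; rewrite e0 N0 in Nm; apply: b0nz; apply: Neq0.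
have hb := Npos (b ⊖ m); have hm := Npos m.
have := IH (b ⊖ m) ltac:(have := d_pos; lia) (Bsub bB mB).
have -> : (N b).-1 = (N (b ⊖ m)).-1 + d by lia.
by move=> h; rewrite dvdn_addl.
Qed.

Lemma claim2 b z : b \in B -> le z b -> d %| (N z).-1 -> z \in B.
Proof.
have [n hn] : exists n, N b <= n by exists (N b).
elim: n b hn => [|n IH] b hn bB zb dz; first by have := Npos b; lia.
case: (z =P b) => [->//|nzb].
have bnz : b <> O by move=> e; apply: nzb; rewrite e in zb *; apply: ble_0.
have [m [mB mb Nm]] := step bB bnz.
have e := Nsub mb.
have hlt := Nstrict zb nzb.
have d1 := claim1 bB.
have dp := d_pos.
have hb := Npos (b ⊖ m); have hm := Npos m; have hz := Npos z.
have key : (N z).-1 <= (N (b ⊖ m)).-1.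
  have : (N z).-1 < (N b).-1 by lia.
  move: dz d1; rewrite (_ : (N b).-1 = (N (b ⊖ m)).-1 + d); last by lia.
  move=> /dvdnP [p ->] /dvdnP [q hq].
  have -> : (N (b ⊖ m)).-1 = (q - 1) * d.
    by rewrite mulnBl mul1n -hq addnK.
  move=> h; rewrite leq_mul2r; apply/orP; right.
  have : p * d < q * d by lia.
  by rewrite ltn_mul2r => /andP [_ ]; lia.
apply: (IH (b ⊖ m)) => //.
- have := d_pos; lia.
- exact: Bsub.
- apply: (Nle zb (ble_sub A b m)); lia.
Qed.


Lemma down_sub s : is_subalg A (down s) /\ is_downset A (down s).
Proof.
split; first split.
- by rewrite in_down; apply/eqP; apply: ble0.
- move=> x y; rewrite !in_down => /eqP hx _; apply/eqP.
  exact: ble_trans (ble_sub A x y) hx.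
- move=> x y; rewrite !in_down => /eqP hy /eqP hxy; apply/eqP.
  exact: ble_trans hxy hy.
Qed.

Lemma chain_iso : is_chain A B -> exists D, in_Sd A D /\ subalg_iso A B D.
Proof.
move=> Bch.
have [t tB tmax] : exists2 t, t \in B & forall b, b \in B -> N b <= N t.
  by case: (@arg_maxnP _ b0 (mem B) N b0B) => t tB h; exists t.
have tt : forall b, b \in B -> le b t.
  move=> b bB; case: (Bch b t bB tB) => /eqP // tb.
  case: (t =P b) => [->|ntb]; first exact: bsubxx.
  by have := Nstrict tb ntb; have := tmax b bB; lia.
have dp := d_pos.
have [m mdef] : exists m, m = (N t).-1 %/ d by eexists.
have [s [st Ns]] : exists s, le s t /\ N s = m.+1.
  apply: (exists_N c0 cmin) => //.
  have := Npos t; have : m <= (N t).-1 by rewrite mdef; apply: leq_div.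
  lia.
pose f := fun b => iter (m - (N b).-1 %/ d) (fun u => u ⊖ c) s.
have qm : forall b, b \in B -> (N b).-1 %/ d <= m.
  by move=> b bB; rewrite mdef; apply: leq_div2r; have := tmax b bB; lia.
have fp : forall b, b \in B -> N (f b) = (N b).-1 %/ d + 1 /\ le (f b) s.
  move=> b bB; have := qm b bB => hq.
  have hk : m - (N b).-1 %/ d < N s.
    by rewrite Ns; move: hq; move: (_ %/ _) => q; lia.
  have [e1 e2] := @N_iter T A c c0 cmin s (m - (N b).-1 %/ d) hk.
  by split => //; rewrite e1 Ns; move: hq; move: (_ %/ _) => q; lia.
have divE : forall b, b \in B -> (N b).-1 = (N b).-1 %/ d * d.
  by move=> b bB; rewrite divnK // claim1.
have fNinj : forall b b', b \in B -> b' \in B -> N (f b) = N (f b') -> b = b'.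
  move=> b b' bB b'B; rewrite (fp b bB).1 (fp b' b'B).1 => h.
  apply: (Ninj (tt b bB) (tt b' b'B)).
  have := divE b bB; have := divE b' b'B; have := Npos b; have := Npos b'.
  have : (N b).-1 %/ d = (N b').-1 %/ d by lia.
  move=> -> ; lia.
have fmono : forall b b', b \in B -> b' \in B -> le b b' -> le (f b) (f b').
  move=> b b' bB b'B h; apply: (Nle (fp b bB).2 (fp b' b'B).2).
  rewrite (fp b bB).1 (fp b' b'B).1 leq_add2r; apply: leq_div2r.
  by have := Nmono h; lia.
exists (down s); split; first exact: down_sub.
exists f; split; last split.
- by move=> x y xB yB e; apply: fNinj => //; rewrite e.
- apply/setP => z; apply/imsetP/idP.
    by case=> b bB ->; rewrite in_down; apply/eqP; apply: (fp b bB).2.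
  rewrite in_down => /eqP zs.
  pose j := (N z).-1.
  have jm : j <= m by have := Nmono zs; have := Npos z; rewrite Ns /j; lia.
  have [b [bt Nb]] : exists b, le b t /\ N b = (j * d).+1.
    apply: (exists_N c0 cmin) => //.
    have : m * d <= (N t).-1 by rewrite mdef; apply: leq_trunc_div.
    have : j * d <= m * d by rewrite leq_mul2r jm orbT.
    have := Npos t; lia.
  have bB : b \in B.
    apply: (claim2 tB bt); rewrite Nb /=; exact: dvdn_mull.
  exists b => //; apply: (Ninj zs (fp b bB).2).
  rewrite (fp b bB).1 Nb /= mulnK //; have := Npos z; rewrite /j; lia.
- move=> x y xB yB; case: (Bch x y xB yB) => /eqP h.
    rewrite h; have fxy := fmono x y xB yB h.
    rewrite fxy; apply: Neq0; by rewrite (fp O B0).1 N0 /= div0n.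
  have xyB := Bsub xB yB.
  have fyx := fmono y x yB xB h.
  apply: (Ninj (fp _ xyB).2 (ble_trans (ble_sub A _ _) (fp x xB).2)).
  have e1 := Nsub fyx; have e2 := Nsub h.
  rewrite (fp _ xyB).1.
  have := divE x xB; have := divE y yB; have := divE _ xyB.
  have := Npos x; have := Npos y; have := Npos (x ⊖ y); have := Npos (f x ⊖ f y).
  rewrite (fp x xB).1 (fp y yB).1 in e1.
  move: e1 e2.
  move: ((N x).-1 %/ d) ((N y).-1 %/ d) ((N (x ⊖ y)).-1 %/ d) => p q r.
  move=> e1 e2 h1 h2 h3 h4 h5 h6 h7.
  have : r * d + q * d = p * d by lia.
  rewrite -mulnDl => /eqP; rewrite eqn_mul2r (negbTE (lt0n_neq0 dp)) /= => /eqP.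
  lia.
Qed.


Lemma d1_downset : d = 1 -> is_downset A B.
Proof.
move=> d1 x y yB /eqP xy; apply: (claim2 yB xy); rewrite d1; exact: dvd1n.
Qed.

Lemma Sdelta_case : 1 < d -> in_Sdelta_Sd A B \/ is_chain A B.
Proof.
move=> d2.
pose C := [set z | [exists b in B, ble A z b]].
have BC : forall b, b \in B -> b \in C.
  by move=> b bB; rewrite inE; apply/existsP; exists b; rewrite bB /ble bsubxx eqxx.
have Cdown : forall x y, y \in C -> le x y -> x \in C.
  move=> x y; rewrite !inE => /existsP [b /andP [bB /eqP yb]] xy.
  by apply/existsP; exists b; rewrite bB /ble (ble_trans xy yb) eqxx.
have Cinv : forall z, z \in C -> exists2 b, b \in B & le z b.
  by move=> z; rewrite inE => /existsP [b /andP [bB /eqP h]]; exists b.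
clearbody C.
have CSd : in_Sd A C.
  split; first split.
  - exact: BC.
  - move=> x y xC _; apply: (Cdown _ _ xC); exact: ble_sub.
  - by move=> x y yC /eqP xy; exact: Cdown _ _ yC xy.
have hgtE : forall x, x \in C -> hgt A C x = (N x).-1.
  move=> x xC; rewrite /hgt /N; congr (_.-1); apply: eq_card => z.
  rewrite !inE /ble bck_ax3 eqxx /=.
  apply/andP/idP => [[] //|zx]; split => //; apply: (Cdown _ _ xC); exact/eqP.
have [xm xmC xmE] := @eq_bigmax_cond _ (mem C) (hgt A C) ltac:(by apply/card_gt0P; exists b0; apply: BC).
have [bm bmB xmbm] : exists2 bm, bm \in B & le xm bm.
  exact: Cinv.
have hmax : forall x, x \in C -> (N x).-1 <= height A C.
  by move=> x xC; rewrite -hgtE //; apply: (@leq_bigmax_cond _ (mem C)).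
have heightE : height A C = (N bm).-1.
  apply/eqP; rewrite eqn_leq hmax ?BC // andbT.
  rewrite /height xmE hgtE //; have := Nmono xmbm; have := Npos xm; lia.
case: (d =P height A C) => [dh|dh].
  right => x y xB yB.
  case: (x =P O) => [->|xnz]; first by left; apply/eqP; apply: ble0.
  case: (y =P O) => [->|ynz]; first by right; apply/eqP; apply: ble0.
  left; apply/eqP.
  have mB : meet x y \in B by apply: Bsub => //; apply: Bsub.
  have h1 := b0min mB (U xnz ynz).
  have h2 := hmax x (BC x xB).
  have h3 := Nmono (ble_sub A x (x ⊖ y)).
  have e : meet x y = x.
    apply: (Ninj (ble_sub A x (x ⊖ y)) (bsubxx A x)); have := Npos x; lia.
  by rewrite -e; apply: bmeet_le.
left; exists C; split => //; split; first by split.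
exists d; split; [|split; [lia|split => //]].
  by rewrite heightE; apply: claim1.
apply/setP => z; rewrite in_setU !inE.
case: (boolP (z \in B)) => zB.
  by rewrite (BC z zB) /= (hgtE z (BC z zB)) claim1.
apply/esym/negbTE; rewrite negb_or; apply/andP; split.
  apply/negP => /andP [zC dz]; apply: (negP zB).
  have [b bB zb] := Cinv z zC.
  by apply: (claim2 bB zb); rewrite -(hgtE z zC).
apply/negP => /andP [zC /forallP mx]; apply: (negP zB).
have [b bB zb] := Cinv z zC.
have := mx b; rewrite (BC b bB) /ble zb eqxx /= => /eqP <-; exact: bB.
Qed.

End Classify.

Lemma iso_id (T : finType) (A : cBCK T) (B : {set T}) : subalg_iso A B B.
Proof.
exists id; split; first by move=> x y.
by split; [rewrite imset_id | ].
Qed.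

Lemma classify (T : finType) (A : cBCK T) (c : T) :
  c <> bzero A -> (forall u, u <> bzero A -> bop A c u = bzero A) ->
  (forall x y, x <> bzero A -> y <> bzero A -> bop A x (bop A x y) <> bzero A) ->
  forall B : {set T}, is_subalg A B ->
  is_downset A B \/ (exists D, in_Sd A D /\ subalg_iso A B D) \/
  (in_Sdelta_Sd A B /\ (is_chain A B -> exists D, in_Sd A D /\ subalg_iso A B D)).
Proof.
move=> c0 cmin U B [B0 Bsub].
case: (boolP [exists b in B, b != bzero A]) => [/existsP [b1 /andP [b1B b1nz]]|hn].
  pose P := [pred b | (b \in B) && (b != bzero A)].
  have P1 : P b1 by rewrite /P /= b1B b1nz.
  case: (@arg_minnP _ b1 P (N A) P1) => b0 /andP [b0B /eqP b0nz] b0m.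
  have b0min : forall b, b \in B -> b <> bzero A -> N A b0 <= N A b.
    by move=> b bB /eqP bnz; apply: b0m; rewrite /P /= bB bnz.
  have dp := d_pos c0 cmin B0 b0B b0nz.
  case: ((N A b0).-1 =P 1) => [d1|d1].
    by left; apply: (d1_downset c0 cmin U B0 Bsub b0B b0nz b0min d1).
  have d2 : 1 < (N A b0).-1 by lia.
  have ci := chain_iso c0 cmin U B0 Bsub b0B b0nz b0min.
  case: (Sdelta_case c0 cmin U B0 Bsub b0B b0nz b0min d2) => h.
    by right; right.
  by right; left; apply: ci.
left => x y yB /eqP xy.
have y0 : y = bzero A.
  by apply/eqP; apply: contraNT hn => ny; apply/existsP; exists y; rewrite yB ny.
by rewrite y0 in xy; rewrite (ble_0 xy).
Qed.

Theorem mainTheorem4 (T : finType) (A : cBCK T) :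
  subdirectly_irreducible A ->
  ((forall B : {set T}, is_subalg A B ->
      exists D : {set T}, (in_Sd A D \/ in_Sdelta_Sd A D) /\ subalg_iso A B D) /\
   (forall D : {set T}, in_Sd A D \/ in_Sdelta_Sd A D -> is_subalg A D)) /\
  ((forall D : {set T}, in_Sdelta_Sd A D -> is_chain A D) ->
   forall B : {set T}, is_subalg A B ->
     exists D : {set T}, in_Sd A D /\ subalg_iso A B D).
Proof.
move=> SI.
have U := SI_U SI.
have [x0 x0nz] : exists x, x <> bzero A.
  case: SI => [a [b [ab _]]].
  case: (a =P bzero A) => [ea|na]; last by exists a.
  by exists b => eb; apply: ab; rewrite ea eb.
have [c [c0 cmin]] := exists_atom U x0nz.
have cl := classify c0 cmin U.
split; first split.
- move=> B hB; case: (cl B hB) => [hd|[[D [h1 h2]]|[h1 h2]]].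
  + by exists B; split; [left; split | exact: iso_id].
  + by exists D; split; [left|].
  + by exists B; split; [right | exact: iso_id].
- by move=> D [[h _]|[C [_ [h _]]]].
move=> Hch B hB; case: (cl B hB) => [hd|[[D [h1 h2]]|[h1 h2]]].
- by exists B; split; [split | exact: iso_id].
- by exists D.
- exact: h2 (Hch B h1).
Qed.
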